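(* Let $n\geq 4$, $1\leq d\leq n-1$, and $G\in\Omega_{n,d}$. Suppose $\{v_0,v_1,v_2\}\subseteq[n]$ is a set of three vertices such that the induced subdigraph $G[\{v_0,v_1,v_2\}]$ is a directed 3-cycle. Then there exists a useful neighbour or a useful arc for this 3-cycle.
   Context: $\Omega_{n,d}$ is the set of simple digraphs on $[n]$ in which every vertex has in-degree and out-degree $d$. For $U=\{v_0,v_1,v_2\}$ define the subsets of $V(G)\setminus U$: $\mathcal{W}^{(0,0)}=\{x: (x,u)\notin A(G),(u,x)\notin A(G)\ \forall u\in U\}$, $\mathcal{W}^{(0,1)}=\{x:(x,u)\notin A(G),(u,x)\in A(G)\ \forall u\in U\}$, $\mathcal{W}^{(1,0)}=\{x:(x,u)\in A(G),(u,x)\notin A(G)\ \forall u\in U\}$, $\mathcal{W}^{(1,1)}=\{x:(x,u)\in A(G),(u,x)\in A(G)\ \forall u\in U\}$. A vertex $x\in V(G)\setminus U$ is a useful neighbour for the 3-cycle if $x$ lies in none of the four sets $\mathcal{W}^{(i,j)}$. An ordered pair $(x,y)$ with $x\neq y$ is a useful arc for the 3-cycle if either (U1) $(x,y)\in A(G)$, $x\in\mathcal{W}^{(0,0)}\cup\mathcal{W}^{(0,1)}$ and $y\in\mathcal{W}^{(0,0)}\cup\mathcal{W}^{(1,0)}$; or (U2) $(x,y)\notin A(G)$, $x\in\mathcal{W}^{(1,0)}\cup\mathcal{W}^{(1,1)}$ and $y\in\mathcal{W}^{(0,1)}\cup\mathcal{W}^{(1,1)}$. *)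

(* Defs.v *)
From mathcomp Require Import all_boot.
Set Implicit Arguments. Unset Strict Implicit. Unset Printing Implicit Defensive.

(* A digraph on [n] = 'I_n is a relation e : rel 'I_n ; (x,y) is an arc iff e x y. *)

(* Simple digraph: no loops (antiparallel arcs are allowed, multiple arcs
   are impossible in a relation). *)
Definition simple_digraph (n : nat) (e : rel 'I_n) : Prop :=
  forall x, ~~ e x x.

Definition in_Omega (n d : nat) (e : rel 'I_n) : Prop :=
  simple_digraph e /\
  forall x : 'I_n, #|[set y | e x y]| = d /\ #|[set y | e y x]| = d.

Definition induced_dir_3cycle (n : nat) (e : rel 'I_n) (v0 v1 v2 : 'I_n) : Prop :=
  [/\ v0 != v1, v1 != v2, v0 != v2,
      [&& e v0 v1, e v1 v2 & e v2 v0] &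
      [&& ~~ e v1 v0, ~~ e v2 v1 & ~~ e v0 v2]].


Definition W (n : nat) (e : rel 'I_n) (U : {set 'I_n}) (i j : bool) : {set 'I_n} :=
  [set x | (x \notin U) && [forall u in U, (e x u == i) && (e u x == j)]].

Definition useful_neighbour (n : nat) (e : rel 'I_n) (U : {set 'I_n}) (x : 'I_n) : bool :=
  [&& x \notin U, x \notin W e U false false, x \notin W e U false true,
      x \notin W e U true false & x \notin W e U true true].

Definition useful_arc (n : nat) (e : rel 'I_n) (U : {set 'I_n}) (x y : 'I_n) : bool :=
  (x != y) &&
  ([&& e x y, (x \in W e U false false) || (x \in W e U false true)
            & (y \in W e U false false) || (y \in W e U true false)]
   || [&& ~~ e x y, (x \in W e U true false) || (x \in W e U true true)
            & (y \in W e U false true) || (y \in W e U true true)]).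

(* Main.v *)
Require Import Defs.
From mathcomp Require Import all_boot.
Set Implicit Arguments. Unset Strict Implicit. Unset Printing Implicit Defensive.

Lemma W_char n (e : rel 'I_n) (U : {set 'I_n}) i j x u :
  x \in W e U i j -> u \in U -> (e x u = i) /\ (e u x = j).
Proof.
rewrite inE => /andP [_ /forallP H] hu.
by move: (H u); rewrite hu /= => /andP [/eqP -> /eqP ->].
Qed.

Lemma W_notin n (e : rel 'I_n) (U : {set 'I_n}) i j x :
  x \in W e U i j -> x \notin U.
Proof. by rewrite inE => /andP []. Qed.

Lemma inU3 n (a b c w : 'I_n) : w \in [set a; b; c] -> [\/ w = a, w = b | w = c].
Proof. by rewrite !inE => /orP [/orP [] | ] /eqP ->; [constructor 1|constructor 2|constructor 3]. Qed.

Theorem mainTheorem6 (n d : nat) (e : rel 'I_n) (v0 v1 v2 : 'I_n) :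
  4 <= n -> 1 <= d <= n.-1 -> in_Omega d e ->
  induced_dir_3cycle e v0 v1 v2 ->
  (exists x, useful_neighbour e [set v0; v1; v2] x) \/
  (exists x y, useful_arc e [set v0; v1; v2] x y).
Proof.
move=> hn /andP [hd1 _] [hsimp hdeg] [n01 n12 n02 /and3P [e01 e12 e20] /and3P [f10 f21 f02]].
set U := [set v0; v1; v2].
have v0U : v0 \in U by rewrite !inE eqxx.
have v1U : v1 \in U by rewrite !inE eqxx orbT.
have v2U : v2 \in U by rewrite !inE eqxx !orbT.
have cU : #|U| = 3.
  rewrite /U -setUA cardsU1 cardsU1 cards1 !inE (negbTE n01) (negbTE n02) (negbTE n12) //.
case: (boolP [exists x, useful_neighbour e U x]) => [/existsP [x hx]|hnu].
  by left; exists x.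
have hW : forall x, x \notin U -> x \in W e U (e x v0) (e v0 x).
  move=> x xU.
  move: hnu; rewrite negb_exists => /forallP /(_ x).
  rewrite /useful_neighbour xU /= !negb_and !negbK.
  case/or4P => hx; by have [-> ->] := W_char hx v0U.
have hWu : forall x u, x \notin U -> u \in U -> e x u = e x v0 /\ e u x = e v0 x.
  by move=> x u xU uU; exact: W_char (hW x xU) uU.
right.
case: (boolP [exists x, exists y, useful_arc e U x y]) =>
  [/existsP [x /existsP [y hxy]]|hna]; first by exists x, y.
exfalso.
have hna' : forall x y, ~~ useful_arc e U x y.
  move=> x y; move: hna; rewrite negb_exists => /forallP /(_ x).
  by rewrite negb_exists => /forallP /(_ y).
have [hout0 hin0] := hdeg v0.
have hS : #|[set y | e v0 y]| = (#|[set y | e v0 y] :\ v1|).+1.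
  by rewrite (cardsD1 v1) inE e01.
have hT : #|[set y | e y v0]| = (#|[set y | e y v0] :\ v2|).+1.
  by rewrite (cardsD1 v2) inE e20.
have Snot : forall w, w \in [set y | e v0 y] :\ v1 -> w \notin U.
  move=> w; rewrite !inE => /andP [nw1 ew].
  apply/negP => /orP [/orP [] | ] /eqP ?; subst w.
  - by move: (hsimp v0); rewrite ew.
  - by rewrite eqxx in nw1.
  - by rewrite ew in f02.
have Tnot : forall w, w \in [set y | e y v0] :\ v2 -> w \notin U.
  move=> w; rewrite !inE => /andP [nw2 ew].
  apply/negP => /orP [/orP [] | ] /eqP ?; subst w.
  - by move: (hsimp v0); rewrite ew.
  - by rewrite ew in f10.
  - by rewrite eqxx in nw2.
case: d hd1 hdeg hout0 hin0 hS hT => [//|[|d]] _ hdeg hout0 hin0 hS hT.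
-
  have S0 : [set y | e v0 y] :\ v1 = set0.
    by apply/eqP; rewrite -cards_eq0; move: hS; rewrite hout0 => -[<-].
  have T0 : [set y | e y v0] :\ v2 = set0.
    by apply/eqP; rewrite -cards_eq0; move: hT; rewrite hin0 => -[<-].
  have hz : forall x, x \notin U -> e x v0 = false /\ e v0 x = false.
    move=> x xU; split; apply/negP => ex.
    + have : x \in [set y | e y v0] :\ v2.
        rewrite !inE ex andbT; apply/eqP => ex2; by rewrite ex2 v2U in xU.
      by rewrite T0 inE.
    + have : x \in [set y | e v0 y] :\ v1.
        rewrite !inE ex andbT; apply/eqP => ex1; by rewrite ex1 v1U in xU.
      by rewrite S0 inE.
  have : 0 < #|~: U|.
    have := cardsC U; rewrite cU card_ord => h.
    by rewrite -(ltn_add2l 3) addn0 h.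
  case/card_gt0P => x; rewrite inE => xU.
  have [ox _] := hdeg x.
  move/eqP: ox => /cards1P [y hy].
  have : y \in [set y0 | e x y0] by rewrite hy inE.
  rewrite inE => exy.
  have [x0 x0'] := hz x xU.
  have yU : y \notin U.
    apply/negP => yU; have [h _] := hWu x y xU yU; by rewrite h x0 in exy.
  have [y0 y0'] := hz y yU.
  apply/negP: (hna' x y).
  rewrite /useful_arc exy /=.
  have -> : x != y by apply/eqP => exy'; move: (hsimp x); rewrite {2}exy' exy.
  have := hW x xU; have := hW y yU; rewrite x0 x0' y0 y0' => -> -> //.
-
  have : 0 < #|[set y | e y v0] :\ v2|.
    by move: hT; rewrite hin0 => -[<-].
  case/card_gt0P => z zT.
  have zU := Tnot z zT.
  have ez0 : e z v0 by move: zT; rewrite !inE => /andP [].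
  set S := [set y | e v0 y] :\ v1.
  have sub : U :|: (S :\ z) \subset [set y | e z y].
    apply/subsetP => w; rewrite in_setU => /orP [wU|]; last rewrite in_setD1 => /andP [nwz wS]; rewrite inE.
    + by have [-> _] := hWu z w zU wU.
    + have wU := Snot w wS.
      apply/negPn/negP => ezw.
      apply/negP: (hna' z w).
      rewrite /useful_arc (negbTE ezw) /= eq_sym nwz /=.
      have hz := hW z zU; have hw := hW w wU.
      rewrite ez0 in hz.
      have ew : e v0 w by move: wS; rewrite !inE => /andP [].
      rewrite ew in hw.
      rewrite negbK; apply/andP; split;
        [case: (e v0 z) hz | case: (e w v0) hw] => ->; by rewrite ?orbT.
  have dis : [disjoint U & S :\ z].
    apply/pred0P => w /=; apply/negP => /andP [wU].
    by rewrite in_setD1 => /andP [_ /Snot /negP H]; apply: H.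
  have := subset_leq_card sub.
  rewrite cardsU (disjoint_setI0 dis) cards0 subn0 cU (proj1 (hdeg z)) => hle.
  have hSz := cardsD1 z S.
  move: hS; rewrite hout0 -/S => -[hS].
  have h2 : #|S| <= #|S :\ z|.+1 by rewrite hSz; case: (z \in S).
  rewrite -hS ltnS in h2.
  have := leq_trans (leq_add (leqnn 3) h2) hle.
  by rewrite !addSn ltnn.
Qed.
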